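(* Let $s,t,p\ge 1$, $A,B\in GL(n)$ and $Q\in\mathcal{P}(n)$ with $\lambda_1(Q)\le 1$. If the equation $X^s+A^*X^{-t}A+B^*X^{-p}B=Q$ has a Hermitian positive definite solution, then $$\rho^2(A)<\frac{q^q}{(q+1)^{q+1}}\quad\text{and}\quad \rho^2(B)<\frac{q^q}{(q+1)^{q+1}},\qquad\text{where } q=\min\{t/s,\,p/s\}.$$
   Context: $GL(n)$: $n\times n$ complex nonsingular matrices; $\mathcal{P}(n)$: $n\times n$ Hermitian positive definite matrices. For a Hermitian matrix $M$, $\lambda_1(M)$ is its largest and $\lambda_n(M)$ its smallest eigenvalue. $\rho(M)$ is the spectral radius. Real powers of positive definite matrices are defined by functional calculus. *)

(* Defs.v *)
From Stdlib Require Import Reals Lra Lia Arith.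
Open Scope R_scope.

Record C := mkC { re : R ; im : R }.
Definition C0 : C := mkC 0 0.
Definition C1 : C := mkC 1 0.
Definition RtoC (x : R) : C := mkC x 0.
Definition Cadd (a b : C) : C := mkC (re a + re b) (im a + im b).
Definition Cmul (a b : C) : C :=
  mkC (re a * re b - im a * im b) (re a * im b + im a * re b).
Definition Cconj (a : C) : C := mkC (re a) (- im a).
Definition Cmod (a : C) : R := sqrt (re a * re a + im a * im a).

Fixpoint Csum (n : nat) (f : nat -> C) : C :=
  match n with
  | O => C0
  | S m => Cadd (Csum m f) (f m)
  end.

(** An n x n matrix is a function of (row, column); only entries with
    indices < n matter.  Vectors of C^n are functions nat -> C. *)
Definition Mat := nat -> nat -> C.
Definition Vec := nat -> C.

Definition meq (n : nat) (M N : Mat) : Prop :=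
  forall i j, (i < n)%nat -> (j < n)%nat -> M i j = N i j.
Definition madd (M N : Mat) : Mat := fun i j => Cadd (M i j) (N i j).
Definition mmul (n : nat) (M N : Mat) : Mat :=
  fun i j => Csum n (fun k => Cmul (M i k) (N k j)).
Definition madj (M : Mat) : Mat := fun i j => Cconj (M j i).
Definition mid : Mat := fun i j => if Nat.eqb i j then C1 else C0.
Definition mdiag (d : nat -> R) : Mat :=
  fun i j => if Nat.eqb i j then RtoC (d i) else C0.
Definition mvec (n : nat) (M : Mat) (v : Vec) : Vec :=
  fun i => Csum n (fun k => Cmul (M i k) (v k)).
Definition inner (n : nat) (u v : Vec) : C :=
  Csum n (fun k => Cmul (Cconj (u k)) (v k)).
Definition vnonzero (n : nat) (v : Vec) : Prop :=
  exists i, (i < n)%nat /\ v i <> C0.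

Definition invertible (n : nat) (M : Mat) : Prop :=
  exists N, meq n (mmul n M N) mid /\ meq n (mmul n N M) mid.
Definition unitary (n : nat) (U : Mat) : Prop :=
  meq n (mmul n U (madj U)) mid /\ meq n (mmul n (madj U) U) mid.
Definition hermitian (n : nat) (M : Mat) : Prop :=
  forall i j, (i < n)%nat -> (j < n)%nat -> M i j = Cconj (M j i).
Definition posdef (n : nat) (M : Mat) : Prop :=
  hermitian n M /\
  forall v, vnonzero n v -> 0 < re (inner n v (mvec n M v)).

Definition eigenvalue (n : nat) (M : Mat) (l : C) : Prop :=
  exists v, vnonzero n v /\ forall i, (i < n)%nat -> mvec n M v i = Cmul l (v i).

Definition is_lambda_max (n : nat) (M : Mat) (l : R) : Prop :=
  eigenvalue n M (RtoC l) /\ forall l', eigenvalue n M (RtoC l') -> l' <= l.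

Definition is_spectral_radius (n : nat) (M : Mat) (r : R) : Prop :=
  (exists l, eigenvalue n M l /\ Cmod l = r) /\
  forall l, eigenvalue n M l -> Cmod l <= r.

(** Real powers of a positive definite matrix by functional calculus:
    mpow_is n X a Y  means  Y = X^a, i.e. X = U diag(d) U^* with U unitary and
    d > 0, and Y = U diag(d^a) U^*. *)
Definition mpow_is (n : nat) (X : Mat) (a : R) (Y : Mat) : Prop :=
  exists (U : Mat) (d : nat -> R),
    unitary n U /\ (forall i, (i < n)%nat -> 0 < d i) /\
    meq n X (mmul n (mmul n U (mdiag d)) (madj U)) /\
    meq n Y (mmul n (mmul n U (mdiag (fun i => Rpower (d i) a))) (madj U)).

(* Main.v *)
Require Import Defs.
From Stdlib Require Import Reals Lra.
Open Scope R_scope.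

Lemma Rdiv_le_0_compat a b : 0 <= a -> 0 < b -> 0 <= a / b.
Proof. intros; unfold Rdiv; apply Rmult_le_pos; auto; left; apply Rinv_0_lt_compat; auto. Qed.

Lemma exp_le_m x y : x <= y -> exp x <= exp y.
Proof. intros [H|H]. left; apply exp_increasing; auto. subst; lra. Qed.

Lemma ln_le_sub1 y : 0 < y -> ln y <= y - 1.
Proof. intros Hy. pose proof (exp_ineq1_le (ln y)). rewrite exp_ln in H; lra. Qed.

Lemma wamgm x y al : 0 < x -> 0 < y -> 0 <= al <= 1 ->
  al * ln x + (1 - al) * ln y <= ln (al * x + (1 - al) * y).
Proof.
  intros Hx Hy Hal.
  set (M := al * x + (1 - al) * y).
  assert (HM : 0 < M).
  { unfold M. destruct (Rle_dec x y).
    - assert (al * x + (1-al) * y >= al * x + (1 - al) * x) by nra. nra.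
    - assert (al * x + (1-al) * y >= al * y + (1 - al) * y) by nra. nra. }
  assert (H1 : ln (x / M) <= x / M - 1) by (apply ln_le_sub1; apply Rdiv_lt_0_compat; auto).
  assert (H2 : ln (y / M) <= y / M - 1) by (apply ln_le_sub1; apply Rdiv_lt_0_compat; auto).
  unfold Rdiv in H1, H2. rewrite ln_mult, ln_Rinv in H1, H2; auto; try (apply Rinv_0_lt_compat; auto).
  assert (Hsum : al * (x * / M) + (1 - al) * (y * / M) = 1).
  { unfold M in *. field. lra. }
  nra.
Qed.

Lemma wamgm_exp x y al : 0 < x -> 0 < y -> 0 <= al <= 1 ->
  exp (al * ln x + (1 - al) * ln y) <= al * x + (1 - al) * y.
Proof.
  intros Hx Hy Hal.
  assert (HM : 0 < al * x + (1 - al) * y).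
  { destruct (Rle_dec x y).
    - assert (al * x + (1-al) * y >= al * x + (1 - al) * x) by nra. nra.
    - assert (al * x + (1-al) * y >= al * y + (1 - al) * y) by nra. nra. }
  rewrite <- (exp_ln (al * x + (1 - al) * y)) by auto.
  apply exp_le_m, wamgm; auto.
Qed.

Lemma tangent_s a d s : 0 < a -> 0 < d -> 1 <= s ->
  s * Rpower a (s - 1) * d <= (s - 1) * Rpower a s + Rpower d s.
Proof.
  intros Ha Hd Hs. unfold Rpower.
  pose proof (wamgm_exp (exp (s * ln a)) (exp (s * ln d)) ((s - 1) / s)
                (exp_pos _) (exp_pos _)) as H.
  assert (Hal : 0 <= (s - 1) / s <= 1).
  { split. apply Rdiv_le_0_compat; lra. apply Rmult_le_reg_r with s; [lra|].
    unfold Rdiv; rewrite Rmult_assoc, Rinv_l by lra; lra. }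
  specialize (H Hal). rewrite !ln_exp in H.
  replace ((s - 1) / s * (s * ln a) + (1 - (s - 1) / s) * (s * ln d))
    with ((s - 1) * ln a + ln d) in H by (field; lra).
  rewrite exp_plus, exp_ln in H by auto.
  apply Rmult_le_compat_l with (r := s) in H; [|lra].
  replace (s * ((s - 1) / s * exp (s * ln a) + (1 - (s - 1) / s) * exp (s * ln d)))
    with ((s - 1) * exp (s * ln a) + exp (s * ln d)) in H by (field; lra).
  lra.
Qed.

Lemma tangent_neg a d t : 0 < a -> 0 < d -> 0 < t ->
  (1 + t) * Rpower a (- t) <= Rpower d (- t) + t * Rpower a (- t - 1) * d.
Proof.
  intros Ha Hd Ht. unfold Rpower.
  assert (Hx : 0 < exp ((- t - 1) * ln a) * d) by (apply Rmult_lt_0_compat; auto; apply exp_pos).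
  pose proof (wamgm_exp _ (exp (- t * ln d)) (t / (t + 1)) Hx (exp_pos _)) as H.
  assert (Hal : 0 <= t / (t + 1) <= 1).
  { split. apply Rdiv_le_0_compat; lra. apply Rmult_le_reg_r with (t + 1); [lra|].
    unfold Rdiv; rewrite Rmult_assoc, Rinv_l by lra; lra. }
  specialize (H Hal). rewrite ln_mult in H by (auto; apply exp_pos). rewrite !ln_exp in H.
  replace (t / (t + 1) * ((- t - 1) * ln a + ln d) + (1 - t / (t + 1)) * (- t * ln d))
    with (- t * ln a) in H by (field; lra).
  apply Rmult_le_compat_l with (r := t + 1) in H; [|lra].
  replace ((t + 1) * (t / (t + 1) * (exp ((- t - 1) * ln a) * d) +
       (1 - t / (t + 1)) * exp (- t * ln d)))
    with (t * exp ((- t - 1) * ln a) * d + exp (- t * ln d)) in H by (field; lra).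
  replace (- t * ln a) with (- (t) * ln a) in H by ring.
  replace (- t * ln d) with (- (t) * ln d) in H by ring.
  lra.
Qed.

Lemma fbound u q : 0 < u < 1 -> 0 < q ->
  exp (q * ln u) * (1 - u) <= Rpower q q / Rpower (q + 1) (q + 1).
Proof.
  intros Hu Hq.
  assert (Hx : 0 < u * (q + 1) / q) by (apply Rdiv_lt_0_compat; nra).
  assert (Hy : 0 < (1 - u) * (q + 1)) by nra.
  assert (Hal : 0 <= q / (q + 1) <= 1).
  { split. apply Rdiv_le_0_compat; lra. apply Rmult_le_reg_r with (q + 1); [lra|].
    unfold Rdiv; rewrite Rmult_assoc, Rinv_l by lra; lra. }
  pose proof (wamgm _ _ _ Hx Hy Hal) as H.
  replace (q / (q + 1) * (u * (q + 1) / q) + (1 - q / (q + 1)) * ((1 - u) * (q + 1)))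
    with 1 in H by (field; lra).
  rewrite ln_1 in H. unfold Rdiv in H.
  rewrite !ln_mult, ln_Rinv in H by (auto; try lra; try apply Rinv_0_lt_compat; try nra).
  apply Rmult_le_compat_l with (r := q + 1) in H; [|lra].
  replace ((q + 1) * (q * / (q + 1) * (ln u + ln (q + 1) + - ln q) +
       (1 - q * / (q + 1)) * (ln (1 - u) + ln (q + 1))))
    with (q * ln u + ln (1 - u) + ((q + 1) * ln (q + 1) - q * ln q)) in H by (field; lra).
  assert (H2 : q * ln u + ln (1 - u) <= q * ln q - (q + 1) * ln (q + 1)) by lra.
  apply exp_le_m in H2. rewrite exp_plus, exp_ln in H2 by lra.
  unfold Rminus at 2 in H2. rewrite exp_plus, exp_Ropp in H2. unfold Rpower.
  unfold Rdiv. lra.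
Qed.

Lemma scalar_final a s t p m : 0 < a -> 1 <= s -> 1 <= t -> 1 <= p -> 0 <= m ->
  Rpower a s + m * Rpower a (- t) < 1 ->
  let q := Rmin (t / s) (p / s) in m < Rpower q q / Rpower (q + 1) (q + 1).
Proof.
  intros Ha Hs Ht Hp Hm H q.
  assert (Hq : 0 < q).
  { unfold q. apply Rmin_glb_lt; apply Rdiv_lt_0_compat; lra. }
  assert (Hqs : q * s <= t).
  { assert (q <= t / s) by apply Rmin_l.
    apply Rmult_le_compat_r with (r := s) in H0; [|lra].
    unfold Rdiv in H0. rewrite Rmult_assoc, Rinv_l, Rmult_1_r in H0 by lra. lra. }
  destruct (Rlt_or_le m (Rpower q q / Rpower (q + 1) (q + 1))) as [Hlt|Hge]; auto.
  exfalso. unfold Rpower at 1 2 in H.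
  assert (He : 0 < exp (- t * ln a)) by apply exp_pos.
  destruct (Rle_or_lt 1 (exp (s * ln a))) as [H1|H1].
  - nra.
  - assert (Hla : ln a < 0).
    { destruct (Rlt_or_le (ln a) 0); auto. exfalso.
      assert (exp 0 <= exp (s * ln a)) by (apply exp_le_m; nra). rewrite exp_0 in H2. lra. }
    pose proof (fbound (exp (s * ln a)) q (conj (exp_pos _) H1) Hq) as Hf.
    rewrite ln_exp in Hf.
    assert (Hc : exp (t * ln a) <= exp (q * (s * ln a))) by (apply exp_le_m; nra).
    assert (Hc2 : exp (t * ln a) * (1 - exp (s * ln a)) <= m) by nra.
    assert (Hone : exp (t * ln a) * exp (- t * ln a) = 1).
    { rewrite <- exp_plus. replace (t * ln a + - t * ln a) with 0 by ring. apply exp_0. }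
    nra.
Qed.

From mathcomp Require Import all_boot all_order all_algebra.
From mathcomp Require Import Rstruct complex.
From mathcomp Require Import ring lra.
Require Import Defs.
Set Implicit Arguments. Unset Strict Implicit. Unset Printing Implicit Defensive.
Import Order.TTheory GRing.Theory Num.Theory.
Local Open Scope ring_scope.
Local Open Scope sesquilinear_scope.

Definition c2C (a : Defs.C) : R[i] := (re a +i* im a)%C.
Definition C2c (z : R[i]) : Defs.C := mkC (complex.Re z) (complex.Im z).

Lemma c2C_add a b : c2C (Cadd a b) = c2C a + c2C b.
Proof. by []. Qed.
Lemma c2C_mul a b : c2C (Cmul a b) = c2C a * c2C b.
Proof. by []. Qed.
Lemma c2C_conj a : c2C (Cconj a) = (c2C a)^*.
Proof. by []. Qed.
Lemma c2C0 : c2C C0 = 0. Proof. by []. Qed.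
Lemma c2C1 : c2C C1 = 1. Proof. by []. Qed.
Lemma c2C_RtoC r : c2C (RtoC r) = r%:C%C. Proof. by []. Qed.
Lemma c2CK a : C2c (c2C a) = a. Proof. by case: a. Qed.
Lemma C2cK z : c2C (C2c z) = z. Proof. by case: z. Qed.
Lemma c2C_inj a b : c2C a = c2C b -> a = b.
Proof. by move=> /(congr1 C2c); rewrite !c2CK. Qed.

Lemma c2C_sum n f : c2C (Csum n f) = \sum_(i < n) c2C (f i).
Proof.
elim: n => [|n IH]; first by rewrite big_ord0.
by rewrite big_ord_recr /= c2C_add IH.
Qed.

Definition toM n (M : Mat) : 'M[R[i]]_n := \matrix_(i, j) c2C (M i j).
Definition toV n (v : Vec) : 'cV[R[i]]_n := \col_i c2C (v i).

Lemma toM_mul n M N : toM n (mmul n M N) = toM n M *m toM n N.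
Proof.
apply/matrixP => i j; rewrite !mxE /mmul c2C_sum.
by apply: eq_bigr => k _; rewrite !mxE c2C_mul.
Qed.

Lemma toM_add n M N : toM n (madd M N) = toM n M + toM n N.
Proof. by apply/matrixP => i j; rewrite !mxE. Qed.

Lemma toM_adj n M : toM n (madj M) = (toM n M)^t*.
Proof. by apply/matrixP => i j; rewrite !mxE. Qed.

Lemma toM_id n : toM n mid = 1%:M.
Proof.
apply/matrixP => i j; rewrite !mxE /mid.
case: (PeanoNat.Nat.eqb_spec i j) => [/val_inj -> | Hne]; first by rewrite eqxx.
by case: eqP => // Hij; rewrite Hij in Hne.
Qed.

Lemma toM_diag n d : toM n (mdiag d) = diag_mx (\row_i ((d i)%:C)%C).
Proof.
apply/matrixP => i j; rewrite !mxE /mdiag.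
case: (PeanoNat.Nat.eqb_spec i j) => [/val_inj -> | Hne]; first by rewrite eqxx mulr1n.
case: eqP => [Hij|]; first by rewrite Hij in Hne.
by rewrite mulr0n.
Qed.

Lemma meq_toM n M N : meq n M N -> toM n M = toM n N.
Proof.
move=> H; apply/matrixP => i j; rewrite !mxE.
have Hi : (i < n)%coq_nat by apply/ssrnat.ltP.
have Hj : (j < n)%coq_nat by apply/ssrnat.ltP.
by rewrite (H i j Hi Hj).
Qed.

Lemma toM_meq n M N : toM n M = toM n N -> meq n M N.
Proof.
move=> H i j /ssrnat.ltP Hi /ssrnat.ltP Hj; apply: c2C_inj.
by have := congr1 (fun A : 'M[R[i]]_n => A (Ordinal Hi) (Ordinal Hj)) H; rewrite !mxE.
Qed.

Lemma toV_mvec n M v : toV n (mvec n M v) = toM n M *m toV n v.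
Proof.
apply/matrixP => i j; rewrite !mxE /mvec c2C_sum.
by apply: eq_bigr => k _; rewrite !mxE c2C_mul.
Qed.

Lemma c2C_inner n u v : c2C (inner n u v) = ((toV n u)^t* *m toV n v) 0 0.
Proof.
rewrite /inner c2C_sum mxE; apply: eq_bigr => k _.
by rewrite !mxE c2C_mul c2C_conj.
Qed.

Lemma vnonzero_toV n v : vnonzero n v -> toV n v != 0.
Proof.
case=> i [/ssrnat.ltP Hi Hv]; apply/eqP => /matrixP /(_ (Ordinal Hi) 0).
rewrite !mxE => H; apply: Hv; apply: c2C_inj; by rewrite H.
Qed.

Lemma toV_vnonzero n v : toV n v != 0 -> vnonzero n v.
Proof.
move=> H; case: (boolP [exists i : 'I_n, c2C (v i) != 0]) => [/existsP [i Hi] | /existsPn H0].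
  exists i; split; first by apply/ssrnat.ltP.
  by move=> E; move: Hi; rewrite E c2C0 eqxx.
exfalso; move/eqP: H; apply; apply/matrixP => i j; rewrite !mxE.
by have := H0 i; rewrite negbK => /eqP.
Qed.

Definition ofV n (x : 'cV[R[i]]_n) : Vec :=
  fun i => match @insub nat (fun k => (k < n)%N) 'I_n i with Some k => C2c (x k 0) | None => C0 end.

Lemma ofVK n x : toV n (ofV x) = x.
Proof.
apply/matrixP => i j; rewrite !mxE /ofV (ord1 j).
by rewrite (valK i) C2cK.
Qed.

Lemma eigen_to n M l : Defs.eigenvalue n M l ->
  exists x : 'cV[R[i]]_n, x != 0 /\ toM n M *m x = c2C l *: x.
Proof.
case=> v [Hv He]; exists (toV n v); split; first exact: vnonzero_toV.
apply/matrixP => i j; rewrite -toV_mvec /toV !mxE He; last by apply/ssrnat.ltP.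
by rewrite c2C_mul.
Qed.

Lemma eigen_of n M l : (exists x : 'cV[R[i]]_n, x != 0 /\ toM n M *m x = c2C l *: x) ->
  Defs.eigenvalue n M l.
Proof.
case=> x [Hx He]; exists (ofV x); split.
  by apply: toV_vnonzero; rewrite ofVK.
move=> i /ssrnat.ltP Hi; apply: c2C_inj.
have := congr1 (fun A : 'cV[R[i]]_n => A (Ordinal Hi) 0) He.
rewrite -{1}(ofVK x) -toV_mvec !mxE => ->.
by rewrite c2C_mul; congr (_ * _); rewrite -[in LHS](ofVK x) /toV mxE.
Qed.

Lemma herm_to n Q : hermitian n Q -> toM n Q \is hermsymmx.
Proof.
move=> H; apply/is_hermitianmxP; rewrite expr0 scale1r.
apply/matrixP => i j; rewrite !mxE H; last 2 first.
- by apply/ssrnat.ltP.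
- by apply/ssrnat.ltP.
by rewrite c2C_conj.
Qed.

Lemma unitary_to n U : unitary n U ->
  toM n U *m (toM n U)^t* = 1%:M /\ (toM n U)^t* *m toM n U = 1%:M.
Proof.
case=> H1 H2; split.
  by rewrite -toM_adj -toM_mul -toM_id; apply: meq_toM.
by rewrite -toM_adj -toM_mul -toM_id; apply: meq_toM.
Qed.

Lemma invertible_to n B : invertible n B -> toM n B \in unitmx.
Proof.
case=> N [H1 _]; have := meq_toM H1; rewrite toM_mul toM_id.
by case/mulmx1_unit.
Qed.

Lemma mpow_to n X a Y : mpow_is n X a Y ->
  exists (U : 'M[R[i]]_n) (d : 'I_n -> R),
    U *m U^t* = 1%:M /\ U^t* *m U = 1%:M /\ (forall i, Rlt 0 (d i)) /\
    toM n X = U *m diag_mx (\row_i ((d i)%:C)%C) *m U^t* /\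
    toM n Y = U *m diag_mx (\row_i ((Rpower (d i) a)%:C)%C) *m U^t*.
Proof.
case=> U [d [HU [Hd [HX HY]]]].
have [H1 H2] := unitary_to HU.
exists (toM n U), (fun i => d i); split; first by [].
split; first by []. split.
  by move=> i; apply: Hd; apply/ssrnat.ltP.
split.
  by rewrite (meq_toM HX) !toM_mul toM_adj toM_diag.
rewrite (meq_toM HY) !toM_mul toM_adj toM_diag.
by congr (_ *m diag_mx _ *m _); apply/matrixP => i j; rewrite !mxE.
Qed.

Lemma sum_lin n (c d : 'I_n -> R) K1 K2 :
  \sum_i (K1 * d i - K2) * c i = K1 * (\sum_i d i * c i) - K2 * \sum_i c i.
Proof. by rewrite !mulr_sumr -sumrB; apply: eq_bigr => i _; rewrite mulrBl mulrA. Qed.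

Lemma sum_lin2 n (c d : 'I_n -> R) K1 K2 :
  \sum_i (K1 - K2 * d i) * c i = K1 * (\sum_i c i) - K2 * \sum_i d i * c i.
Proof. by rewrite !mulr_sumr -sumrB; apply: eq_bigr => i _; rewrite mulrBl mulrA. Qed.

Lemma jensen_s n (c d : 'I_n -> R) a s :
  (forall i, 0 <= c i) -> (forall i, Rlt 0 (d i)) -> Rlt 0 a -> Rle 1 s ->
  \sum_i d i * c i = a * \sum_i c i ->
  (\sum_i c i) * Rpower a s <= \sum_i Rpower (d i) s * c i.
Proof.
move=> Hc Hd Ha Hs HS.
have Hle : \sum_i (s * Rpower a (s - 1) * d i - (s - 1) * Rpower a s) * c i
           <= \sum_i Rpower (d i) s * c i.
  apply: ler_sum => i _; rewrite ler_wpM2r //.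
  have /RleP := tangent_s a (d i) s Ha (Hd i) Hs.
  rewrite ?RmultE ?RminusE ?RplusE ?R1E ?R0E => H; lra.
rewrite sum_lin HS in Hle.
have E : Rmult (Rpower a (s - 1)) a = Rpower a s.
  by rewrite -{2}(Rpower_1 a Ha) -Rpower_plus; congr Rpower; rewrite RplusE R1E subrK.
apply: le_trans Hle; rewrite -E RmultE le_eqVlt; apply/orP; left; apply/eqP; ring.
Qed.

Lemma jensen_t n (c d : 'I_n -> R) a t :
  (forall i, 0 <= c i) -> (forall i, Rlt 0 (d i)) -> Rlt 0 a -> Rlt 0 t ->
  \sum_i d i * c i = a * \sum_i c i ->
  (\sum_i c i) * Rpower a (Ropp t) <= \sum_i Rpower (d i) (Ropp t) * c i.
Proof.
move=> Hc Hd Ha Ht HS.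
have Hle : \sum_i ((1 + t) * Rpower a (Ropp t) - t * Rpower a (Ropp t - 1) * d i) * c i
           <= \sum_i Rpower (d i) (Ropp t) * c i.
  apply: ler_sum => i _; rewrite ler_wpM2r //.
  have /RleP := tangent_neg a (d i) t Ha (Hd i) Ht.
  rewrite ?RmultE ?RminusE ?RplusE ?R1E ?R0E => H; lra.
rewrite sum_lin2 HS in Hle.
have E : Rmult (Rpower a (Ropp t - 1)) a = Rpower a (Ropp t).
  by rewrite -{2}(Rpower_1 a Ha) -Rpower_plus; congr Rpower; rewrite RplusE R1E subrK.
apply: le_trans Hle; rewrite -E RmultE le_eqVlt; apply/orP; left; apply/eqP; ring.
Qed.

Definition qf n (M : 'M[R[i]]_n) (y : 'cV[R[i]]_n) : R[i] := (y^t* *m M *m y) 0 0.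
Definition nsq (z : R[i]) : R := (complex.Re z) ^+ 2 + (complex.Im z) ^+ 2.

Lemma nsqE (z : R[i]) : ((nsq z)%:C)%C = `|z| ^+ 2.
Proof. by rewrite /nsq add_Re2_Im2. Qed.

Lemma nsq_ge0 z : 0 <= nsq z.
Proof. by rewrite /nsq addr_ge0 // sqr_ge0. Qed.

Lemma nsq_gt0 z : z != 0 -> 0 < nsq z.
Proof.
move=> Hz; rewrite -ltcR nsqE; apply: exprn_gt0; by rewrite normr_gt0.
Qed.

Lemma rcD (x y : R) : ((x + y)%:C)%C = ((x%:C)%C + (y%:C)%C :> R[i]).
Proof. by apply/eqP; rewrite eq_complex /= addr0 !eqxx. Qed.
Lemma rcM (x y : R) : ((x * y)%:C)%C = ((x%:C)%C * (y%:C)%C :> R[i]).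
Proof. by apply/eqP; rewrite eq_complex /= !mulr0 !mul0r subr0 addr0 !eqxx. Qed.
Lemma rc0 : ((0 : R)%:C)%C = 0 :> R[i]. Proof. by []. Qed.
Lemma rc_sum n (f : 'I_n -> R) : ((\sum_i f i)%:C)%C = \sum_i ((f i)%:C)%C :> R[i].
Proof.
elim: n f => [|n IH] f; first by rewrite !big_ord0.
by rewrite !big_ord_recr /= rcD IH.
Qed.

Lemma adjM m n p (A : 'M[R[i]]_(m, n)) (B : 'M[R[i]]_(n, p)) : (A *m B)^t* = B^t* *m A^t*.
Proof. by rewrite trmx_mul map_mxM. Qed.

Lemma qf_add n (M N : 'M[R[i]]_n) y : qf (M + N) y = qf M y + qf N y.
Proof. by rewrite /qf mulmxDr mulmxDl mxE. Qed.

Lemma qf_conj n (A M : 'M[R[i]]_n) y : qf (A^t* *m M *m A) y = qf M (A *m y).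
Proof. by rewrite /qf adjM !mulmxA. Qed.

Lemma qf_scale n (M : 'M[R[i]]_n) (c : R[i]) y : qf M (c *: y) = c^* * c * qf M y.
Proof.
rewrite /qf.
have -> : (c *: y)^t* = c^* *: y^t* by apply/matrixP => i j; rewrite !mxE rmorphM.
by rewrite -!scalemxAl -scalemxAr !mxE; ring.
Qed.

Lemma qf_diag n (U : 'M[R[i]]_n) (e : 'I_n -> R) y :
  qf (U *m diag_mx (\row_i ((e i)%:C)%C) *m U^t*) y =
  ((\sum_i e i * nsq ((U^t* *m y) i 0))%:C)%C.
Proof.
rewrite /qf.
have -> : y^t* *m (U *m diag_mx (\row_i ((e i)%:C)%C) *m U^t*) *m y =
  (U^t* *m y)^t* *m diag_mx (\row_i ((e i)%:C)%C) *m (U^t* *m y).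
  by rewrite adjM trmxCK !mulmxA.
rewrite mul_mx_diag mxE rc_sum; apply: eq_bigr => k _.
by rewrite !mxE rcM nsqE normCKC; ring.
Qed.

Lemma qf1 n (y : 'cV[R[i]]_n) : qf 1%:M y = ((\sum_i nsq (y i 0))%:C)%C.
Proof.
rewrite /qf mulmx1 mxE rc_sum; apply: eq_bigr => k _.
by rewrite !mxE nsqE normCKC.
Qed.

Lemma qf1_unitary n (U : 'M[R[i]]_n) y : U *m U^t* = 1%:M -> qf 1%:M (U^t* *m y) = qf 1%:M y.
Proof.
move=> HU; rewrite -qf_conj trmxCK mulmx1 HU //.
Qed.

Lemma exists_max n (f : 'I_n -> R) : (0 < n)%N -> exists k0, forall k, f k <= f k0.
Proof.
move=> Hn; have [k0 _ Hk] := @arg_maxP _ R _ (Ordinal Hn) xpredT f isT.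
by exists k0 => k; apply: Hk.
Qed.

Lemma nonzero_entry n (w : 'cV[R[i]]_n) : w != 0 -> exists i, w i 0 != 0.
Proof.
move=> Hw; case: (boolP [exists i : 'I_n, w i 0 != 0]) => [/existsP [i Hi] | /existsPn H0].
  by exists i.
exfalso; move/eqP: Hw; apply; apply/matrixP => i j; rewrite !mxE (ord1 j).
by have := H0 i; rewrite negbK => /eqP.
Qed.

Lemma rayleigh n (Q : 'M[R[i]]_n) : (0 < n)%N -> Q \is hermsymmx ->
  exists l : R,
    (exists v : 'cV[R[i]]_n, v != 0 /\ Q *m v = ((l%:C)%C) *: v) /\
    (forall l' : R, (exists v : 'cV[R[i]]_n, v != 0 /\ Q *m v = ((l'%:C)%C) *: v) -> l' <= l) /\
    (forall y, qf Q y <= ((l%:C)%C) * qf 1%:M y).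
Proof.
move=> Hn HQ.
have HQe0 : Q = invmx (spectralmx Q) *m diag_mx (spectral_diag Q) *m (spectralmx Q).
  by apply/orthomx_spectralP/hermitian_normalmx.
have Dreal := hermitian_spectral_diag_real HQ.
set P := spectralmx Q in HQe0; set D := spectral_diag Q in HQe0 Dreal.
have PU : P \is unitarymx := spectral_unitarymx Q.
have PP1 : P *m P^t* = 1%:M by apply/unitarymxP.
have PP2 : P^t* *m P = 1%:M by rewrite -invmx_unitary // mulVmx // spectral_unit.
have HQe : Q = P^t* *m diag_mx D *m P by rewrite -invmx_unitary.
have Dr : forall k, D 0 k = ((complex.Re (D 0 k))%:C)%C.
  by move=> k; rewrite RRe_real //; move/mxOverP: Dreal; apply.
set mu := fun k => complex.Re (D 0 k).
have [k0 Hk0] := exists_max mu Hn.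
exists (mu k0); split; [|split].
- exists (P^t* *m delta_mx k0 (0 : 'I_1)); split.
    apply/eqP => Hv; have := congr1 (mulmx P) Hv.
    rewrite mulmxA PP1 mul1mx mulmx0 => /matrixP/(_ k0 0); rewrite !mxE !eqxx /= => /eqP.
    by rewrite oner_eq0.
  rewrite HQe -!mulmxA [P *m (_ *m _)]mulmxA PP1 mul1mx scalemxAr; congr (_ *m _).
  apply/matrixP => i j; rewrite mul_diag_mx !mxE (ord1 j) eqxx andbT.
  case: (eqVneq i k0) => [->|_]; last by rewrite !mulr0n !mulr0.
  by rewrite Dr.
- move=> l' [v [Hv Hev]].
  have Hw : P *m v != 0.
    apply: contra Hv => /eqP Hw; apply/eqP.
    by rewrite -[v]mul1mx -PP2 -mulmxA Hw mulmx0.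
  have HDw : diag_mx D *m (P *m v) = ((l'%:C)%C) *: (P *m v).
    have := congr1 (mulmx P) Hev; rewrite HQe !mulmxA PP1 mul1mx -!mulmxA => ->.
    by rewrite scalemxAr.
  have [i Hi] := nonzero_entry Hw.
  move: HDw Hi; set w := P *m v => HDw Hi; clearbody w.
  have := congr1 (fun M : 'cV[R[i]]_n => M i 0) HDw; rewrite mul_diag_mx !mxE.
  move=> /(mulIf Hi) Heq.
  have -> : l' = mu i by rewrite /mu Heq.
  exact: Hk0.
- move=> y.
  have -> : Q = P^t* *m diag_mx (\row_i ((mu i)%:C)%C) *m (P^t*)^t*.
    rewrite trmxCK HQe; congr (_ *m diag_mx _ *m _).
    by apply/matrixP => i j; rewrite !mxE (ord1 i) -Dr.
  rewrite qf_diag -(@qf1_unitary _ (P^t*) y); last by rewrite trmxCK.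
  rewrite qf1 -rcM lecR mulr_sumr; apply: ler_sum => i _.
  by rewrite ler_wpM2r ?nsq_ge0.
Qed.

Lemma sum_gt0 n (f : 'I_n -> R) : (forall i, 0 <= f i) -> (exists i, 0 < f i) -> 0 < \sum_i f i.
Proof.
move=> H0 [i Hi]; rewrite (bigD1 i) //=.
have : 0 <= \sum_(j | j != i) f j by apply: sumr_ge0 => j _; apply: H0.
move=> H; lra.
Qed.

Lemma unit_nonzero n (U : 'M[R[i]]_n) (x : 'cV[R[i]]_n) : U *m U^t* = 1%:M -> x != 0 -> U^t* *m x != 0.
Proof.
move=> HU; apply: contra => /eqP H; apply/eqP.
by rewrite -[x]mul1mx -HU -mulmxA H mulmx0.
Qed.

Lemma exists_pos_nsq n (w : 'cV[R[i]]_n) : w != 0 -> exists i, 0 < nsq (w i 0).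
Proof. by move=> /nonzero_entry [i Hi]; exists i; apply: nsq_gt0. Qed.

Lemma Rpower_gt0 a b : 0 < Rpower a b.
Proof. by apply/RltP; apply: exp_pos. Qed.

Lemma final_arith (S X1 X2 X3 m As At : R) : 0 < S -> S * As <= X1 -> S * At <= X2 ->
  X1 + (m * X2 + X3) <= S -> 0 < X3 -> 0 <= m -> As + m * At < 1.
Proof.
move=> HS H1 H2 H3 H4 Hm.
have H5 : m * (S * At) <= m * X2 by rewrite ler_wpM2l.
rewrite -(ltr_pM2l HS) mulr1 mulrDr.
lra.
Qed.

Lemma core2 n (w1 w2 w3 : 'cV[R[i]]_n) (d1 d2 d3 : 'I_n -> R) (s t p : R) (m : R) :
  Rle 1 s -> Rlt 0 t ->
  (forall i, Rlt 0 (d1 i)) -> (forall i, Rlt 0 (d2 i)) -> (forall i, Rlt 0 (d3 i)) ->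
  \sum_i nsq (w2 i 0) = \sum_i nsq (w1 i 0) ->
  \sum_i d2 i * nsq (w2 i 0) = \sum_i d1 i * nsq (w1 i 0) ->
  w1 != 0 -> w3 != 0 -> 0 <= m ->
  \sum_i Rpower (d1 i) s * nsq (w1 i 0) +
    (m * \sum_i Rpower (d2 i) (Ropp t) * nsq (w2 i 0) +
     \sum_i Rpower (d3 i) (Ropp p) * nsq (w3 i 0)) <= \sum_i nsq (w1 i 0) ->
  exists a : R, Rlt 0 a /\ Rlt (Rplus (Rpower a s) (Rmult m (Rpower a (Ropp t)))) 1.
Proof.
move=> Hs Ht Hd1 Hd2 Hd3 ES ET Hw1 Hw3 Hm Hle.
have Hc1 : forall i, 0 <= nsq (w1 i 0) by move=> i; apply: nsq_ge0.
have Hc2 : forall i, 0 <= nsq (w2 i 0) by move=> i; apply: nsq_ge0.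
have Hc3 : forall i, 0 <= nsq (w3 i 0) by move=> i; apply: nsq_ge0.
have Hd1' : forall i, 0 < d1 i by move=> i; apply/RltP.
have HSpos : 0 < \sum_i nsq (w1 i 0).
  apply: sum_gt0; first exact: Hc1.
  exact: (exists_pos_nsq Hw1).
have HTpos : 0 < \sum_i d1 i * nsq (w1 i 0).
  apply: sum_gt0; first by move=> i; apply: mulr_ge0; [apply: ltW; apply: Hd1'|apply: Hc1].
  have [i Hi] := exists_pos_nsq Hw1.
  by exists i; apply: mulr_gt0; [apply: Hd1'|apply: Hi].
pose a := (\sum_i d1 i * nsq (w1 i 0)) / (\sum_i nsq (w1 i 0)).
have Ha : 0 < a by apply: divr_gt0.
have HaS : \sum_i d1 i * nsq (w1 i 0) = a * \sum_i nsq (w1 i 0) by rewrite /a divfK // gt_eqF.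
have Ha' : Rlt 0 a by apply/RltP.
have J1 := @jensen_s n (fun i => nsq (w1 i 0)) d1 a s Hc1 Hd1 Ha' Hs HaS.
have HaS2 : \sum_i d2 i * nsq (w2 i 0) = a * \sum_i nsq (w2 i 0) by rewrite ET ES.
have J2 := @jensen_t n (fun i => nsq (w2 i 0)) d2 a t Hc2 Hd2 Ha' Ht HaS2.
rewrite /= ES in J2.
have Hbeta : 0 < \sum_i Rpower (d3 i) (Ropp p) * nsq (w3 i 0).
  apply: sum_gt0; first by move=> i; apply: mulr_ge0; [apply: ltW; apply: Rpower_gt0|apply: Hc3].
  have [i Hi] := exists_pos_nsq Hw3.
  by exists i; apply: mulr_gt0; [apply: Rpower_gt0|apply: Hi].
exists a; split => //; apply/RltP.
exact: (final_arith HSpos J1 J2 Hle Hbeta Hm).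
Qed.

Lemma qf1_U n (U : 'M[R[i]]_n) x : U *m U^t* = 1%:M ->
  qf 1%:M x = ((\sum_i nsq ((U^t* *m x) i 0))%:C)%C.
Proof. by move=> HU; rewrite -(qf1_unitary x HU) qf1. Qed.

Lemma core n (A B Q U1 U2 U3 : 'M[R[i]]_n) (d1 d2 d3 : 'I_n -> R) (s t p : R)
  (x : 'cV[R[i]]_n) (lam : R[i]) :
  Rle 1 s -> Rlt 0 t ->
  U1 *m U1^t* = 1%:M -> U2 *m U2^t* = 1%:M -> U3 *m U3^t* = 1%:M ->
  (forall i, Rlt 0 (d1 i)) -> (forall i, Rlt 0 (d2 i)) -> (forall i, Rlt 0 (d3 i)) ->
  U1 *m diag_mx (\row_i ((d1 i)%:C)%C) *m U1^t* = U2 *m diag_mx (\row_i ((d2 i)%:C)%C) *m U2^t* ->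
  Q = U1 *m diag_mx (\row_i ((Rpower (d1 i) s)%:C)%C) *m U1^t*
      + (A^t* *m (U2 *m diag_mx (\row_i ((Rpower (d2 i) (Ropp t))%:C)%C) *m U2^t*) *m A
      + B^t* *m (U3 *m diag_mx (\row_i ((Rpower (d3 i) (Ropp p))%:C)%C) *m U3^t*) *m B) ->
  B \in unitmx -> x != 0 -> A *m x = lam *: x ->
  qf Q x <= qf 1%:M x ->
  exists a : R, Rlt 0 a /\ Rlt (Rplus (Rpower a s) (Rmult (nsq lam) (Rpower a (Ropp t)))) 1.
Proof.
move=> Hs Ht HU1 HU2 HU3 Hd1 Hd2 Hd3 HX HQ HB Hx HAx Hray.
have ES := complexI (etrans (esym (qf1_U x HU2)) (qf1_U x HU1)).
have ET := complexI (etrans (esym (qf_diag U2 d2 x))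
              (etrans (congr1 (fun M => qf M x) (esym HX)) (qf_diag U1 d1 x))).
have HBx : B *m x != 0.
  apply: contra Hx => /eqP H; apply/eqP.
  by rewrite -[x]mul1mx -(mulVmx HB) -mulmxA H mulmx0.
apply: (@core2 n _ _ _ d1 d2 d3 s t p _ Hs Ht Hd1 Hd2 Hd3 ES ET (unit_nonzero HU1 Hx) (unit_nonzero HU3 HBx) (nsq_ge0 lam)).
move: Hray; rewrite HQ !qf_add !qf_conj HAx qf_scale !qf_diag (qf1_U x HU1).
by rewrite -normCKC -nsqE -!rcM -!rcD lecR.
Qed.

Lemma nz_pos n (x : 'cV[R[i]]_n) : x != 0 -> (0 < n)%N.
Proof. by case: n x => [|n] x //; rewrite flatmx0 eqxx. Qed.

Lemma nsq_Cmod l : nsq (c2C l) = Rmult (Cmod l) (Rmult (Cmod l) 1).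
Proof.
rewrite /Cmod /nsq /= !expr2 Rmult_1_r sqrt_sqrt //.
by apply: Rplus_le_le_0_compat; apply: Rle_0_sqr.
Qed.

Lemma half n (s t p : R) (A B Q X Xs Xt Xp : Mat) :
  Rle 1 s -> Rle 1 t -> Rle 1 p -> invertible n B -> posdef n Q ->
  (forall l1, is_lambda_max n Q l1 -> Rle l1 1) ->
  mpow_is n X s Xs -> mpow_is n X (Ropp t) Xt -> mpow_is n X (Ropp p) Xp ->
  toM n Q = toM n Xs + ((toM n A)^t* *m toM n Xt *m toM n A + (toM n B)^t* *m toM n Xp *m toM n B) ->
  forall r, is_spectral_radius n A r ->
    Rlt (pow r 2) (Rdiv (Rpower (Rmin (Rdiv t s) (Rdiv p s)) (Rmin (Rdiv t s) (Rdiv p s)))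
       (Rpower (Rplus (Rmin (Rdiv t s) (Rdiv p s)) 1) (Rplus (Rmin (Rdiv t s) (Rdiv p s)) 1))).
Proof.
move=> Hs Ht Hp HB [Hherm HQpos] Hl1 HXs HXt HXp HQe r [[l [Hl Hr]] _].
have [x [Hx Hax]] := eigen_to Hl.
have Hn := nz_pos Hx.
have [l0 [Heig [Hmax Hray]]] := rayleigh Hn (herm_to Hherm).
have Hlm : is_lambda_max n Q l0.
  split; first by apply: eigen_of; rewrite c2C_RtoC.
  move=> l' /eigen_to; rewrite c2C_RtoC => Hl'.
  by apply/RleP; apply: Hmax.
have Hl0 := Hl1 l0 Hlm.
have Hray2 : qf (toM n Q) x <= qf 1%:M x.
  apply: le_trans (Hray x) _.
  rewrite qf1 ler_piMl //; first by rewrite ler0c sumr_ge0 // => i _; apply: nsq_ge0.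
  by rewrite lecR; apply/RleP.
have [U1 [d1 [HU1 [_ [Hd1 [HX1 HXs1]]]]]] := mpow_to HXs.
have [U2 [d2 [HU2 [_ [Hd2 [HX2 HXt2]]]]]] := mpow_to HXt.
have [U3 [d3 [HU3 [_ [Hd3 [HX3 HXp3]]]]]] := mpow_to HXp.
have Ht0 : Rlt 0 t by apply: Rlt_le_trans Ht; apply: Rlt_0_1.
rewrite HXs1 HXt2 HXp3 in HQe.
have [a [Ha Hlt]] := core Hs Ht0 HU1 HU2 HU3 Hd1 Hd2 Hd3 (etrans (esym HX1) HX2) HQe
   (invertible_to HB) Hx Hax Hray2.
rewrite nsq_Cmod Hr in Hlt.
exact: (scalar_final a s t p (pow r 2) Ha Hs Ht Hp (pow2_ge_0 r) Hlt).
Qed.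

Lemma both n (s t p : R) (A B Q : Mat) :
    Rle 1 s -> Rle 1 t -> Rle 1 p ->
    invertible n A -> invertible n B ->
    posdef n Q ->
    (forall l1, is_lambda_max n Q l1 -> Rle l1 1) ->
    (exists X Xs Xt Xp : Mat,
        posdef n X /\
        mpow_is n X s Xs /\ mpow_is n X (Ropp t) Xt /\ mpow_is n X (Ropp p) Xp /\
        meq n (madd Xs (madd (mmul n (mmul n (madj A) Xt) A)
                             (mmul n (mmul n (madj B) Xp) B))) Q) ->
    (forall r, is_spectral_radius n A r ->
       Rlt (pow r 2) (Rdiv (Rpower (Rmin (Rdiv t s) (Rdiv p s)) (Rmin (Rdiv t s) (Rdiv p s)))
       (Rpower (Rplus (Rmin (Rdiv t s) (Rdiv p s)) 1) (Rplus (Rmin (Rdiv t s) (Rdiv p s)) 1)))) /\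
    (forall r, is_spectral_radius n B r ->
       Rlt (pow r 2) (Rdiv (Rpower (Rmin (Rdiv t s) (Rdiv p s)) (Rmin (Rdiv t s) (Rdiv p s)))
       (Rpower (Rplus (Rmin (Rdiv t s) (Rdiv p s)) 1) (Rplus (Rmin (Rdiv t s) (Rdiv p s)) 1)))).
Proof.
move=> Hs Ht Hp HA HB HQ Hl1 [X [Xs [Xt [Xp [HX [HXs [HXt [HXp Heq]]]]]]]].
have E := meq_toM Heq; rewrite !toM_add !toM_mul !toM_adj in E.
split; first exact: (half Hs Ht Hp HB HQ Hl1 HXs HXt HXp (esym E)).
have E2 : toM n Q = toM n Xs + ((toM n B)^t* *m toM n Xp *m toM n B
                                + (toM n A)^t* *m toM n Xt *m toM n A).
  by rewrite -E [X in _ + X = _]addrC.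
move=> r Hr; have := half Hs Hp Ht HA HQ Hl1 HXs HXp HXt E2 Hr.
by rewrite (Rmin_comm (Rdiv p s)).
Qed.

Open Scope R_scope.
Theorem mainTheorem2 :
  forall (n : nat) (s t p : R) (A B Q : Mat),
    1 <= s -> 1 <= t -> 1 <= p ->
    invertible n A -> invertible n B ->
    posdef n Q ->
    (forall l1, is_lambda_max n Q l1 -> l1 <= 1) ->
    (exists X Xs Xt Xp : Mat,
        posdef n X /\
        mpow_is n X s Xs /\ mpow_is n X (- t) Xt /\ mpow_is n X (- p) Xp /\
        meq n (madd Xs (madd (mmul n (mmul n (madj A) Xt) A)
                             (mmul n (mmul n (madj B) Xp) B))) Q) ->
    let q := Rmin (t / s) (p / s) in
    (forall r, is_spectral_radius n A r ->
       r ^ 2 < Rpower q q / Rpower (q + 1) (q + 1)) /\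
    (forall r, is_spectral_radius n B r ->
       r ^ 2 < Rpower q q / Rpower (q + 1) (q + 1)).
Proof.
intros n s t p A B Q Hs Ht Hp HA HB HQ Hl1 HE q.
exact (both Hs Ht Hp HA HB HQ Hl1 HE).
Qed.
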